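(* Let $p$ be a prime, $G$ a group and $H$ a subgroup of $G$ that is topologically $p$-embedded in $G$. Let $\Gamma=\langle G,t \mid t^{-1}ht=h\ \text{for all } h\in H\rangle$. Then $G$ is topologically $p$-embedded in $\Gamma$.
   Context: A subgroup $H$ of a group $G$ is topologically $p$-embedded in $G$ if the subspace topology on $H$ induced by the pro-$p$ topology on $G$ equals the pro-$p$ topology of $H$; equivalently, for every normal subgroup $N$ of $H$ of $p$-power index there is a normal subgroup $M$ of $G$ of $p$-power index with $M\cap H\le N$. *)

(* Defs.v *)
From mathcomp Require Import all_boot.
Set Implicit Arguments. Unset Strict Implicit. Unset Printing Implicit Defensive.

Record Grp := {
  carrier :> Type;
  gmul : carrier -> carrier -> carrier;
  gone : carrier;
  ginv : carrier -> carrier;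
  gmulA : forall x y z, gmul x (gmul y z) = gmul (gmul x y) z;
  gmul1 : forall x, gmul gone x = x;
  gmulV : forall x, gmul (ginv x) x = gone
}.

Arguments gmul {g} _ _.
Arguments gone {g}.
Arguments ginv {g} _.

Definition is_subgroup (G : Grp) (S : G -> Prop) : Prop :=
  S gone /\ (forall x y, S x -> S y -> S (gmul x y)) /\ (forall x, S x -> S (ginv x)).

Definition normal_in (G : Grp) (N S : G -> Prop) : Prop :=
  is_subgroup N /\ (forall x, N x -> S x) /\
  (forall s x, S s -> N x -> N (gmul (ginv s) (gmul x s))).

(* N has index n in S: the left cosets x N (x in S) are in bijection with 'I_n *)
Definition index_in (G : Grp) (N S : G -> Prop) (n : nat) : Prop :=
  exists f : G -> 'I_n,
    (forall i, exists x, S x /\ f x = i) /\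
    (forall x y, S x -> S y -> (f x = f y <-> N (gmul (ginv x) y))).

Definition normal_ppower_index (p : nat) (G : Grp) (N S : G -> Prop) : Prop :=
  normal_in N S /\ exists k, index_in N S (p ^ k).

Definition is_hom (G K : Grp) (f : G -> K) : Prop :=
  forall x y, f (gmul x y) = gmul (f x) (f y).

Definition top_p_embedded (p : nat) (G : Grp) (S : G -> Prop) : Prop :=
  forall N, normal_ppower_index p N S ->
    exists M, normal_ppower_index p M (fun _ => True) /\
      (forall x, M x -> S x -> N x).

(* (Gam, iota, t) is the group <G, t | t^-1 h t = h (h in H)>, characterised by
   the universal property of this presentation. *)
Definition is_HNN_centralizing (G : Grp) (H : G -> Prop)
    (Gam : Grp) (iota : G -> Gam) (t : Gam) : Prop :=
  is_hom iota /\
  (forall h, H h -> gmul (ginv t) (gmul (iota h) t) = iota h) /\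
  (forall (K : Grp) (phi : G -> K) (k : K), is_hom phi ->
     (forall h, H h -> gmul (ginv k) (gmul (phi h) k) = phi h) ->
     (exists psi : Gam -> K, is_hom psi /\ (forall g, psi (iota g) = phi g) /\ psi t = k) /\
     (forall psi1 psi2 : Gam -> K, is_hom psi1 -> is_hom psi2 ->
        (forall g, psi1 (iota g) = phi g) -> psi1 t = k ->
        (forall g, psi2 (iota g) = phi g) -> psi2 t = k ->
        forall x, psi1 x = psi2 x)).

(* Main.v *)
Require Import Defs.
From mathcomp Require Import all_boot.

Section GL.
Variable G : Grp.
Lemma mulVr (x : G) : gmul x (ginv x) = gone.
Proof.
set y := ginv x.
rewrite -[gmul x y]gmul1 -(gmulV y) -gmulA (gmulA y x y).
by rewrite /y gmulV gmul1 -/y gmulV.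
Qed.
Lemma mulr1 (x : G) : gmul x gone = x.
Proof. by rewrite -(gmulV x) gmulA mulVr gmul1. Qed.
Lemma mulI (a x y : G) : gmul a x = gmul a y -> x = y.
Proof. by move=> E; rewrite -(gmul1 x) -(gmul1 y) -(gmulV a) -!gmulA E. Qed.
Lemma invU (a b : G) : gmul a b = gone -> a = ginv b.
Proof. by move=> E; rewrite -(mulr1 a) -(mulVr b) gmulA E gmul1. Qed.
End GL.

Lemma hom1 (G K : Grp) (f : G -> K) : is_hom f -> f gone = gone.
Proof.
move=> hf; apply: (@mulI K (f gone)); by rewrite -hf gmul1 mulr1.
Qed.
Lemma homV (G K : Grp) (f : G -> K) : is_hom f -> forall x, f (ginv x) = ginv (f x).
Proof. by move=> hf x; apply: invU; rewrite -hf gmulV hom1. Qed.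

Theorem lemma2p3 (p : nat) (G : Grp) (H : G -> Prop)
    (Gam : Grp) (iota : G -> Gam) (t : Gam) :
  prime p ->
  is_subgroup H ->
  top_p_embedded p H ->
  is_HNN_centralizing H iota t ->
  top_p_embedded p (fun y : Gam => exists g : G, iota g = y).
Proof.
move=> _ _ _ [hi [_ U]].
have hid : is_hom (fun x : G => x) by [].
have hc : forall h, H h -> gmul (ginv (@gone G)) (gmul h gone) = h.
  move=> h _; have -> : ginv (@gone G) = gone by symmetry; apply: invU; rewrite gmul1.
  by rewrite gmul1 mulr1.
have [[r [hr [ri _]]] _] := U G (fun x => x) gone hid hc.
have hc2 : is_hom (fun y => iota (r y)) by move=> x y; rewrite hr hi.
move=> N [[[N1 [NM NV]] [NS Nc]] [k [f [fs fe]]]].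
exists (fun y => N (iota (r y))); split; last first.
  move=> x Nx [g E]; subst x; move: Nx; by rewrite ri.
split.
  split; first split.
  - by rewrite (@hom1 _ _ _ hc2).
  - split; first by move=> x y Nx Ny; rewrite (hc2 x y); exact: NM.
    by move=> x Nx; rewrite (@homV _ _ _ hc2); exact: NV.
  split; first by [].
  move=> s x _ Nx; rewrite (hc2 _ (gmul x s)) (hc2 x s) (@homV _ _ _ hc2).
  by apply: Nc => //; exists (r s).
exists k, (fun y => f (iota (r y))); split.
  move=> i; have [x [[g <-] <-]] := fs i; exists (iota g); split => //.
  by rewrite ri.
move=> x y _ _; rewrite (hc2 _ y) (@homV _ _ _ hc2); apply: fe.
  by exists (r x).
by exists (r y).
Qed.
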